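(* Let $y\in[0,1]$, $z\in(0,1]$, and $U=H^{(z)}_{12}H^{(y)}_{23}$. Then $$\sup_{\sigma}\ \mathrm{Tr}\big[U(\sigma\otimes|0\rangle\langle0|)U^\dagger\,\big((\mathbb 1-|0\rangle\langle0|)\otimes|0\rangle\langle0|\otimes|0\rangle\langle0|\big)\big]=1-(1-y)(1-z),$$ where the supremum is over all density operators $\sigma$ on the two-mode Fock space (modes $1,2$), and it is attained by the state $$|\phi\rangle=\sqrt{\tfrac{z}{1-(1-y)(1-z)}}\,|10\rangle+\sqrt{\tfrac{y(1-z)}{1-(1-y)(1-z)}}\,|01\rangle.$$ In particular, for $y=1-\frac1{2(1-x)}$, $z=2x$ with $x\in(0,\tfrac12]$, the supremum equals $\frac1{2(1-x)}$.
   Context: Bosonic modes $1,2,3$ with creation operators $\hat a_k^\dagger$ and Fock states $|n\rangle$; in tensor products the factors are modes $1,2,3$ in order, and $\sigma\otimes|0\rangle\langle0|$ means mode $3$ is in the vacuum. For $r\in[0,1]$, $H^{(r)}_{kl}$ is the passive linear-optical unitary fixing the vacuum with $\hat a_k^\dagger\mapsto\sqrt r\,\hat a_k^\dagger+\sqrt{1-r}\,\hat a_l^\dagger$, $\hat a_l^\dagger\mapsto\sqrt{1-r}\,\hat a_k^\dagger-\sqrt r\,\hat a_l^\dagger$. $U=H^{(z)}_{12}H^{(y)}_{23}$ means first $H^{(y)}$ on modes $2,3$, then $H^{(z)}$ on modes $1,2$. The projector $(\mathbb 1-|0\rangle\langle0|)\otimes|00\rangle\langle00|$ corresponds to ideal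 threshold (click/no-click) detectors registering a click on mode $1$ and no click on modes $2,3$. *)

(* Defs.v *)
From Stdlib Require Import Reals Lra Factorial.
Open Scope R_scope.

Record C := mkC { Re : R; Im : R }.
Definition Cadd (u v : C) : C := mkC (Re u + Re v) (Im u + Im v).
Definition Cmul (u v : C) : C :=
  mkC (Re u * Re v - Im u * Im v) (Re u * Im v + Im u * Re v).
Definition Cconj (u : C) : C := mkC (Re u) (- Im u).
Definition RtoC (r : R) : C := mkC r 0.

Fixpoint Csum (n : nat) (f : nat -> C) : C :=
  match n with
  | O => f O
  | S k => Cadd (Csum k f) (f (S k))
  end.

(** * Passive linear optics on three modes (modes 1,2,3 of the paper are
    indexed 0,1,2 here).
    A mode matrix M describes the unitary U with U|vac> = |vac> and
    U a_k^dag U^dag = sum_l M l k a_l^dag  (column k = image of a_k^dag). *)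
Definition mode_mat := nat -> nat -> R.

Definition id_mode : mode_mat := fun i j => if Nat.eqb i j then 1 else 0.

Definition Hmode (r : R) (k l : nat) : mode_mat := fun i j =>
  if Nat.eqb j k then
    (if Nat.eqb i k then sqrt r else if Nat.eqb i l then sqrt (1 - r) else 0)
  else if Nat.eqb j l then
    (if Nat.eqb i k then sqrt (1 - r) else if Nat.eqb i l then - sqrt r else 0)
  else id_mode i j.

Definition mmul (A B : mode_mat) : mode_mat := fun i j =>
  A i 0%nat * B 0%nat j + A i 1%nat * B 1%nat j + A i 2%nat * B 2%nat j.

Definition Umode (y z : R) : mode_mat := mmul (Hmode z 0 1) (Hmode y 1 2).

(** Three-mode vectors in the Fock basis (real amplitudes suffice here). *)
Definition fock3 := nat -> nat -> nat -> R.

Definition vac3 : fock3 := fun m0 m1 m2 =>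
  match m0, m1, m2 with O, O, O => 1 | _, _, _ => 0 end.

Definition create (l : nat) (f : fock3) : fock3 := fun m0 m1 m2 =>
  match l with
  | O => match m0 with O => 0 | S p => sqrt (INR m0) * f p m1 m2 end
  | 1%nat => match m1 with O => 0 | S p => sqrt (INR m1) * f m0 p m2 end
  | _ => match m2 with O => 0 | S p => sqrt (INR m2) * f m0 m1 p end
  end.

Definition create_img (M : mode_mat) (k : nat) (f : fock3) : fock3 :=
  fun m0 m1 m2 =>
    M 0%nat k * create 0 f m0 m1 m2 + M 1%nat k * create 1 f m0 m1 m2
    + M 2%nat k * create 2 f m0 m1 m2.

Fixpoint iter_create (M : mode_mat) (k j : nat) (f : fock3) : fock3 :=
  match j with
  | O => f
  | S j' => create_img M k (iter_create M k j' f)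
  end.

(** passive_amp M n0 n1 n2 m0 m1 m2 = <m0 m1 m2| U |n0 n1 n2>, computed from
    |n> = prod_k (a_k^dag)^{n_k} / sqrt(n_k!) |vac>, U|vac> = |vac>. *)
Definition passive_amp (M : mode_mat) (n0 n1 n2 : nat) : fock3 :=
  fun m0 m1 m2 =>
    iter_create M 0 n0 (iter_create M 1 n1 (iter_create M 2 n2 vac3)) m0 m1 m2
    / sqrt (INR (fact n0 * fact n1 * fact n2)).

(** * Two-mode density operators, as matrices in the Fock basis:
    s a b a' b' = <a b| sigma |a' b'>. *)
Definition dens2 := nat -> nat -> nat -> nat -> C.

Definition is_density (s : dens2) : Prop :=
  (forall a b a' b', s a b a' b' = Cconj (s a' b' a b)) /\
  (* positive semidefinite (tested on all finitely supported vectors) *)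
  (forall (N : nat) (v : nat -> nat -> C),
     0 <= Re (Csum N (fun a => Csum N (fun b => Csum N (fun a' => Csum N (fun b' =>
              Cmul (Cconj (v a b)) (Cmul (s a b a' b') (v a' b')))))))) /\
  (* unit trace (diagonal summed by total photon number n = a + b) *)
  infinite_sum (fun n => Re (Csum n (fun a => s a (n - a)%nat a (n - a)%nat))) 1.

(** <n,0,0| U (sigma (x) |0><0|) U^dag |n,0,0>; only inputs a,b <= n can
    contribute (U conserves photon number). *)
Definition click_term (y z : R) (s : dens2) (n : nat) : R :=
  Re (Csum n (fun a => Csum n (fun b => Csum n (fun a' => Csum n (fun b' =>
     Cmul (RtoC (passive_amp (Umode y z) a b 0%nat n 0%nat 0%nat))
          (Cmul (s a b a' b')
                (Cconj (RtoC (passive_amp (Umode y z) a' b' 0%nat n 0%nat 0%nat))))))))).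

(** Tr[U(sigma (x) |0><0|)U^dag ((1-|0><0|) (x) |0><0| (x) |0><0|)] = t,
    i.e. sum over the basis states |n,0,0>, n >= 1. *)
Definition click_prob_is (y z : R) (s : dens2) (t : R) : Prop :=
  infinite_sum (fun n => click_term y z s (S n)) t.

Definition achievable (y z : R) : R -> Prop :=
  fun t => exists s : dens2, is_density s /\ click_prob_is y z s t.

Definition phi_vec (y z : R) : nat -> nat -> C := fun a b =>
  match a, b with
  | 1%nat, O => RtoC (sqrt (z / (1 - (1 - y) * (1 - z))))
  | O, 1%nat => RtoC (sqrt (y * (1 - z) / (1 - (1 - y) * (1 - z))))
  | _, _ => RtoC 0
  end.

Definition pure_dens (v : nat -> nat -> C) : dens2 :=
  fun a b a' b' => Cmul (v a b) (Cconj (v a' b')).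

(* Main.v *)
Require Import Defs.
From Stdlib Require Import Reals Lra Lia Factorial.
Open Scope R_scope.

Lemma sum_zero (g : nat -> R) N : (forall i, (i <= N)%nat -> g i = 0) -> sum_f_R0 g N = 0.
Proof. induction N; intros H; simpl. apply H; lia. rewrite IHN by (intros; apply H; lia). rewrite H by lia. ring. Qed.

Lemma sum_single (g : nat -> R) N k : (k <= N)%nat -> (forall i, (i <= N)%nat -> i <> k -> g i = 0) -> sum_f_R0 g N = g k.
Proof.
  induction N; intros Hk H; simpl.
  - replace k with 0%nat by lia. reflexivity.
  - destruct (Nat.eq_dec k (S N)) as [->|Hne].
    + rewrite sum_zero. ring. intros; apply H; lia.
    + rewrite IHN by (try lia; intros; apply H; lia). rewrite (H (S N)) by lia. ring.
Qed.

Lemma sum_nonneg (g : nat -> R) N : (forall i, (i <= N)%nat -> 0 <= g i) -> 0 <= sum_f_R0 g N.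
Proof. induction N; intros H; simpl. apply H; lia. assert (0 <= g (S N)) by (apply H; lia). assert (0 <= sum_f_R0 g N) by (apply IHN; intros; apply H; lia). lra. Qed.

Lemma sum_le (f g : nat -> R) N : (forall i, (i <= N)%nat -> f i <= g i) -> sum_f_R0 f N <= sum_f_R0 g N.
Proof. induction N; intros H; simpl. apply H; lia. assert (f (S N) <= g (S N)) by (apply H; lia). assert (sum_f_R0 f N <= sum_f_R0 g N) by (apply IHN; intros; apply H; lia). lra. Qed.

Lemma sum_swap (f : nat -> nat -> R) N M :
  sum_f_R0 (fun i => sum_f_R0 (fun j => f i j) N) M = sum_f_R0 (fun j => sum_f_R0 (fun i => f i j) M) N.
Proof.
  induction M; simpl. reflexivity.
  rewrite IHM. rewrite <- plus_sum. reflexivity.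
Qed.

Lemma sum_scal_r (f : nat -> R) c N : sum_f_R0 (fun i => f i * c) N = sum_f_R0 f N * c.
Proof. rewrite <- scal_sum. ring. Qed.
Lemma sum_scal_l (f : nat -> R) c N : sum_f_R0 (fun i => c * f i) N = c * sum_f_R0 f N.
Proof. rewrite scal_sum. apply sum_eq. intros; ring. Qed.

Lemma iter_slice M k j f m :
  iter_create M k j f m 0%nat 0%nat =
  if (j <=? m)%nat then M 0%nat k ^ j * sqrt (INR (fact m) / INR (fact (m - j))) * f (m - j)%nat 0%nat 0%nat else 0.
Proof.
  revert m; induction j; intros m.
  - cbn [iter_create]. replace (0 <=? m)%nat with true by reflexivity.
    rewrite Nat.sub_0_r. unfold Rdiv. rewrite Rinv_r by apply INR_fact_neq_0.
    rewrite sqrt_1. simpl. ring.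
  - cbn [iter_create]. unfold create_img.
    replace (create 1 (iter_create M k j f) m 0%nat 0%nat) with 0 by reflexivity.
    replace (create 2 (iter_create M k j f) m 0%nat 0%nat) with 0 by reflexivity.
    destruct m as [|p].
    + simpl. ring.
    + replace (create 0 (iter_create M k j f) (S p) 0%nat 0%nat) with (sqrt (INR (S p)) * iter_create M k j f p 0%nat 0%nat) by reflexivity.
      rewrite IHj. replace (S j <=? S p)%nat with (j <=? p)%nat by reflexivity.
      replace (S p - S j)%nat with (p - j)%nat by reflexivity.
      destruct (j <=? p)%nat; [|ring].
      replace (fact (S p)) with (S p * fact p)%nat by reflexivity.
      rewrite mult_INR. unfold Rdiv. rewrite (Rmult_assoc (INR (S p))).
      rewrite (sqrt_mult_alt (INR (S p))) by apply pos_INR.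
      simpl pow. ring.
Qed.

Definition amp (y z : R) (n a b : nat) : R := passive_amp (Umode y z) a b 0%nat n 0%nat 0%nat.

Lemma amp_zero y z n a b : (a <= n)%nat -> b <> (n - a)%nat -> amp y z n a b = 0.
Proof.
  intros Ha Hb. unfold amp, passive_amp. cbn [iter_create].
  rewrite iter_slice. replace (a <=? n)%nat with true by (symmetry; apply Nat.leb_le; lia).
  rewrite iter_slice. destruct (b <=? n - a)%nat eqn:E.
  - apply Nat.leb_le in E. destruct (n - a - b)%nat eqn:E2; [lia|]. 
    replace (vac3 (S n0) 0%nat 0%nat) with 0 by reflexivity. unfold Rdiv. ring.
  - unfold Rdiv. ring.
Qed.

Lemma amp_sq y z n a : (a <= n)%nat ->
  amp y z n a (n - a) * amp y z n a (n - a) =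
  Binomial.C n a * (Umode y z 0%nat 0%nat * Umode y z 0%nat 0%nat) ^ a *
  (Umode y z 0%nat 1%nat * Umode y z 0%nat 1%nat) ^ (n - a).
Proof.
  intros Ha. unfold amp, passive_amp. cbn [iter_create].
  rewrite iter_slice. replace (a <=? n)%nat with true by (symmetry; apply Nat.leb_le; lia).
  rewrite iter_slice. replace (n - a <=? n - a)%nat with true by (symmetry; apply Nat.leb_le; lia).
  rewrite Nat.sub_diag. replace (vac3 0%nat 0%nat 0%nat) with 1 by reflexivity.
  set (A := INR (fact n) / INR (fact (n - a))).
  set (B := INR (fact (n - a)) / INR (fact 0)).
  set (D := INR (fact a * fact (n - a) * fact 0)).
  assert (F0 : forall k, 0 < INR (fact k)) by (intros; apply lt_0_INR, lt_O_fact).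
  assert (HA : sqrt A * sqrt A = A). { apply sqrt_sqrt. unfold A. apply Rle_mult_inv_pos. apply pos_INR. apply F0. }
  assert (HB : sqrt B * sqrt B = B). { apply sqrt_sqrt. unfold B. apply Rle_mult_inv_pos. apply pos_INR. apply F0. }
  assert (HD0 : 0 < D). { unfold D. rewrite !mult_INR. pose proof (F0 a). pose proof (F0 (n-a)%nat). pose proof (F0 0%nat). apply Rmult_lt_0_compat; [apply Rmult_lt_0_compat|]; lra. }
  assert (HD : sqrt D * sqrt D = D) by (apply sqrt_sqrt; lra).
  assert (HsD : 0 < sqrt D) by (apply sqrt_lt_R0; lra).
  set (X := Umode y z 0%nat 0%nat). set (Y := Umode y z 0%nat 1%nat).
  rewrite !Rpow_mult_distr.
  transitivity (X^a*X^a * (Y^(n-a)*Y^(n-a)) * (sqrt A * sqrt A) * (sqrt B * sqrt B) / (sqrt D * sqrt D)).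
  { field. lra. }
  rewrite HA, HB, HD. unfold A, B, D, C. rewrite !mult_INR.
  pose proof (F0 a). pose proof (F0 (n-a)%nat). pose proof (F0 0%nat). pose proof (F0 n).
  replace (INR (fact 0)) with 1 by reflexivity. field. lra.
Qed.

Lemma U00 y z : Umode y z 0%nat 0%nat = sqrt z.
Proof. unfold Umode, mmul, Hmode, id_mode. simpl. ring. Qed.
Lemma U01 y z : Umode y z 0%nat 1%nat = sqrt (1 - z) * sqrt y.
Proof. unfold Umode, mmul, Hmode, id_mode. simpl. ring. Qed.

Lemma amp_sum y z n : 0 <= y <= 1 -> 0 <= z <= 1 ->
  sum_f_R0 (fun a => amp y z n a (n - a) * amp y z n a (n - a)) n = (1 - (1 - y) * (1 - z)) ^ n.
Proof.
  intros Hy Hz. rewrite (sum_eq _ (fun i => Binomial.C n i * z ^ i * ((1 - z) * y) ^ (n - i))).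
  - rewrite <- binomial. f_equal. ring.
  - intros i Hi. rewrite amp_sq by lia. rewrite U00, U01.
    rewrite sqrt_sqrt by lra.
    replace (sqrt (1 - z) * sqrt y * (sqrt (1 - z) * sqrt y)) with ((sqrt (1 - z) * sqrt (1-z)) * (sqrt y * sqrt y)) by ring.
    rewrite !sqrt_sqrt by lra. reflexivity.
Qed.

Lemma Ceq (u v : Defs.C) : Re u = Re v -> Im u = Im v -> u = v.
Proof. destruct u, v; simpl; intros; subst; reflexivity. Qed.

Lemma Re_Csum n f : Re (Csum n f) = sum_f_R0 (fun i => Re (f i)) n.
Proof. induction n; simpl. reflexivity. rewrite <- IHn. reflexivity. Qed.

Lemma Re_Csum4 n (F : nat -> nat -> nat -> nat -> Defs.C) :
  Re (Csum n (fun a => Csum n (fun b => Csum n (fun a' => Csum n (fun b' => F a b a' b'))))) =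
  sum_f_R0 (fun a => sum_f_R0 (fun b => sum_f_R0 (fun a' => sum_f_R0 (fun b' => Re (F a b a' b')) n) n) n) n.
Proof.
  rewrite Re_Csum. apply sum_eq; intros. rewrite Re_Csum. apply sum_eq; intros.
  rewrite Re_Csum. apply sum_eq; intros. rewrite Re_Csum. reflexivity.
Qed.

Lemma reduce4 n (X : nat -> nat -> R) (R4 : nat -> nat -> nat -> nat -> R) :
  (forall a b, (a <= n)%nat -> b <> (n - a)%nat -> X a b = 0) ->
  sum_f_R0 (fun a => sum_f_R0 (fun b => sum_f_R0 (fun a' => sum_f_R0 (fun b' => X a b * X a' b' * R4 a b a' b') n) n) n) n
  = sum_f_R0 (fun a => sum_f_R0 (fun a' => X a (n - a)%nat * X a' (n - a')%nat * R4 a (n - a)%nat a' (n - a')%nat) n) n.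
Proof.
  intros HX. apply sum_eq; intros a Ha.
  transitivity (sum_f_R0 (fun b => sum_f_R0 (fun a' => X a b * X a' (n - a')%nat * R4 a b a' (n - a')%nat) n) n).
  { apply sum_eq; intros b Hb. apply sum_eq; intros a' Ha'.
    apply (sum_single (fun b' => X a b * X a' b' * R4 a b a' b')); [lia|]. intros i Hi Hne. rewrite (HX a' i) by lia. ring. }
  apply (sum_single (fun b => sum_f_R0 (fun a' => X a b * X a' (n - a')%nat * R4 a b a' (n - a')%nat) n)); [lia|].
  intros i Hi Hne. apply sum_zero. intros. rewrite (HX a i) by lia. ring.
Qed.

Lemma click_reduce y z s n :
  click_term y z s n = sum_f_R0 (fun a => sum_f_R0 (fun a' =>
     amp y z n a (n - a) * amp y z n a' (n - a') * Re (s a (n - a)%nat a' (n - a')%nat)) n) n.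
Proof.
  unfold click_term. rewrite Re_Csum4.
  rewrite <- (reduce4 n (fun a b => amp y z n a b) (fun a b a' b' => Re (s a b a' b'))).
  - apply sum_eq; intros; apply sum_eq; intros; apply sum_eq; intros; apply sum_eq; intros.
    unfold amp. simpl. ring.
  - intros. apply amp_zero; auto.
Qed.

Lemma psd_reduce s : is_density s -> forall n (u : nat -> R),
  0 <= sum_f_R0 (fun a => sum_f_R0 (fun a' => u a * u a' * Re (s a (n - a)%nat a' (n - a')%nat)) n) n.
Proof.
  intros [_ [Hpsd _]] n u.
  set (X := fun a b => if (b =? n - a)%nat then u a else 0).
  specialize (Hpsd n (fun a b => RtoC (X a b))).
  rewrite Re_Csum4 in Hpsd.
  rewrite (sum_eq _ (fun a => sum_f_R0 (fun a' => X a (n - a)%nat * X a' (n - a')%nat * Re (s a (n - a)%nat a' (n - a')%nat)) n)).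
  - rewrite <- (reduce4 n X (fun a b a' b' => Re (s a b a' b'))).
    + erewrite sum_eq; [exact Hpsd|]. intros; apply sum_eq; intros; apply sum_eq; intros; apply sum_eq; intros.
      simpl. ring.
    + intros a b Ha Hb. unfold X. apply Nat.eqb_neq in Hb. rewrite Hb. reflexivity.
  - intros a Ha. apply sum_eq; intros a' Ha'. unfold X. rewrite !Nat.eqb_refl. reflexivity.
Qed.

Definition dl (i a : nat) (c : R) : R := if (a =? i)%nat then c else 0.

Lemma lin1 N i j c1 c2 (F : nat -> R) : (i <= N)%nat -> (j <= N)%nat ->
  sum_f_R0 (fun a => (dl i a c1 + dl j a c2) * F a) N = c1 * F i + c2 * F j.
Proof.
  intros Hi Hj.
  rewrite (sum_eq _ (fun a => dl i a c1 * F a + dl j a c2 * F a)) by (intros; ring).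
  rewrite plus_sum.
  rewrite (sum_single (fun a => dl i a c1 * F a) N i Hi).
  rewrite (sum_single (fun a => dl j a c2 * F a) N j Hj).
  - unfold dl. rewrite !Nat.eqb_refl. reflexivity.
  - intros k _ Hk. unfold dl. apply Nat.eqb_neq in Hk. rewrite Hk. ring.
  - intros k _ Hk. unfold dl. apply Nat.eqb_neq in Hk. rewrite Hk. ring.
Qed.

Lemma Q2 N (B : nat -> nat -> R) i j c1 c2 : (i <= N)%nat -> (j <= N)%nat ->
  sum_f_R0 (fun a => sum_f_R0 (fun a' => (dl i a c1 + dl j a c2) * (dl i a' c1 + dl j a' c2) * B a a') N) N
  = c1 * c1 * B i i + c1 * c2 * B i j + c2 * c1 * B j i + c2 * c2 * B j j.
Proof.
  intros Hi Hj.
  rewrite (sum_eq _ (fun a => (dl i a c1 + dl j a c2) * (c1 * B a i + c2 * B a j))).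
  - rewrite lin1 by auto. ring.
  - intros a Ha.
    rewrite (sum_eq _ (fun a' => (dl i a' c1 + dl j a' c2) * ((dl i a c1 + dl j a c2) * B a a'))) by (intros; ring).
    rewrite lin1 by auto. ring.
Qed.

Lemma quad_bound n (B : nat -> nat -> R) (w : nat -> R) :
  (forall u : nat -> R, 0 <= sum_f_R0 (fun a => sum_f_R0 (fun a' => u a * u a' * B a a') n) n) ->
  sum_f_R0 (fun a => sum_f_R0 (fun a' => w a * w a' * B a a') n) n
  <= sum_f_R0 (fun a => w a * w a) n * sum_f_R0 (fun a => B a a) n.
Proof.
  intros Hpsd.
  set (P := fun i j => w j * w j * B i i + w i * w i * B j j - w i * w j * B i j - w i * w j * B j i).
  assert (HP : forall i j, (i <= n)%nat -> (j <= n)%nat -> 0 <= P i j).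
  { intros i j Hi Hj. specialize (Hpsd (fun a => dl i a (w j) + dl j a (- w i))).
    cbv beta in Hpsd. rewrite Q2 in Hpsd by auto. unfold P. lra. }
  assert (H0 : 0 <= sum_f_R0 (fun i => sum_f_R0 (fun j => P i j) n) n).
  { apply sum_nonneg; intros; apply sum_nonneg; intros; apply HP; auto. }
  set (W := sum_f_R0 (fun a => w a * w a) n). set (T := sum_f_R0 (fun a => B a a) n).
  set (Q := sum_f_R0 (fun a => sum_f_R0 (fun a' => w a * w a' * B a a') n) n).
  assert (E : sum_f_R0 (fun i => sum_f_R0 (fun j => P i j) n) n =
              sum_f_R0 (fun i => B i i * W + w i * w i * T - sum_f_R0 (fun j => w i * w j * B i j) n
                                 - sum_f_R0 (fun j => w i * w j * B j i) n) n).
  { apply sum_eq; intros i Hi. unfold P. rewrite !minus_sum, !plus_sum.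
    unfold W, T. rewrite <- !sum_scal_l. f_equal; f_equal; f_equal; apply sum_eq; intros; ring. }
  rewrite E in H0. rewrite !minus_sum, !plus_sum in H0.
  rewrite sum_scal_r, sum_scal_r in H0.
  assert (E2 : sum_f_R0 (fun i => sum_f_R0 (fun j => w i * w j * B j i) n) n = Q).
  { unfold Q. rewrite (sum_swap (fun i j => w i * w j * B j i)). apply sum_eq; intros; apply sum_eq; intros; ring. }
  rewrite E2 in H0. fold Q in H0. fold T in H0. fold W in H0. lra.
Qed.

Definition Tr (s : dens2) (n : nat) : R := Re (Csum n (fun a => s a (n - a)%nat a (n - a)%nat)).

Lemma diag_nonneg s n i : is_density s -> (i <= n)%nat -> 0 <= Re (s i (n - i)%nat i (n - i)%nat).
Proof.
  intros Hs Hi. pose proof (psd_reduce s Hs n (fun a => dl i a 1 + dl i a 0)) as H.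
  cbv beta in H. rewrite (Q2 n (fun a a' => Re (s a (n - a)%nat a' (n - a')%nat))) in H by auto. lra.
Qed.

Lemma Tr_nonneg s n : is_density s -> 0 <= Tr s n.
Proof. intros Hs. unfold Tr. rewrite Re_Csum. apply sum_nonneg. intros; apply diag_nonneg; auto. Qed.

Lemma click_bound y z s n : 0 <= y <= 1 -> 0 <= z <= 1 -> is_density s ->
  click_term y z s n <= (1 - (1 - y) * (1 - z)) ^ n * Tr s n.
Proof.
  intros Hy Hz Hs. rewrite click_reduce. rewrite <- amp_sum by auto. unfold Tr. rewrite Re_Csum.
  apply (quad_bound n (fun a a' => Re (s a (n - a)%nat a' (n - a')%nat)) (fun a => amp y z n a (n - a))).
  apply psd_reduce. auto.
Qed.

Lemma partial_le_lim (u : nat -> R) l : infinite_sum u l -> (forall n, 0 <= u n) -> forall N, sum_f_R0 u N <= l.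
Proof.
  intros Hl Hpos. apply growing_ineq.
  - intros n. simpl. pose proof (Hpos (S n)). lra.
  - exact Hl.
Qed.

Lemma lim_le (u : nat -> R) l b : infinite_sum u l -> (forall N, sum_f_R0 u N <= b) -> l <= b.
Proof.
  intros Hl Hb. destruct (Rle_dec l b) as [|Hn]; auto. exfalso.
  destruct (Hl (l - b)) as [N HN]; [lra|]. specialize (HN N (le_n N)). specialize (Hb N).
  unfold Rdist in HN. apply Rabs_def2 in HN. lra.
Qed.

Lemma powle1 p k : 0 <= p <= 1 -> p ^ k <= 1.
Proof. intros Hp. induction k; simpl. lra. pose proof (pow_le p k (proj1 Hp)). nra. Qed.

Lemma upper y z t : 0 <= y <= 1 -> 0 < z <= 1 -> achievable y z t -> t <= 1 - (1 - y) * (1 - z).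
Proof.
  intros Hy Hz [s [Hs Hc]]. set (p := 1 - (1 - y) * (1 - z)).
  assert (Hp : 0 <= p <= 1). { unfold p. split; nra. }
  pose proof Hs as [_ [_ Htr]].
  apply (lim_le _ _ _ Hc). intros N.
  apply Rle_trans with (sum_f_R0 (fun k => p * Tr s (S k)) N).
  - apply sum_le. intros k _. eapply Rle_trans. apply click_bound; auto; lra.
    apply Rmult_le_compat_r. apply Tr_nonneg; auto.
    fold p. simpl. pose proof (powle1 p k Hp). pose proof (pow_le p k (proj1 Hp)). nra.
  - rewrite sum_scal_l. rewrite <- (Rmult_1_r p) at 2. apply Rmult_le_compat_l. lra.
    pose proof (partial_le_lim _ _ Htr (fun n => Tr_nonneg s n Hs) (S N)) as HH.
    rewrite (decomp_sum _ (S N)) in HH by lia. simpl Init.Nat.pred in HH.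
    pose proof (Tr_nonneg s 0 Hs). unfold Tr in *. lra.
Qed.

Lemma Csum_ext n f g : (forall i, (i <= n)%nat -> f i = g i) -> Csum n f = Csum n g.
Proof. induction n; intros H; simpl. apply H; lia. rewrite IHn by (intros; apply H; lia). rewrite H by lia. reflexivity. Qed.

Lemma Csum_mul_l n c f : Csum n (fun i => Cmul c (f i)) = Cmul c (Csum n f).
Proof. induction n; simpl. reflexivity. rewrite IHn. apply Ceq; unfold Cmul, Cadd; simpl; ring. Qed.
Lemma Csum_mul_r n c f : Csum n (fun i => Cmul (f i) c) = Cmul (Csum n f) c.
Proof. induction n; simpl. reflexivity. rewrite IHn. apply Ceq; unfold Cmul, Cadd; simpl; ring. Qed.
Lemma Csum_conj n f : Cconj (Csum n f) = Csum n (fun i => Cconj (f i)).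
Proof. induction n; simpl. reflexivity. rewrite <- IHn. apply Ceq; unfold Cconj, Cadd; simpl; ring. Qed.

Lemma pure_psd (phi : nat -> nat -> Defs.C) N (v : nat -> nat -> Defs.C) :
  0 <= Re (Csum N (fun a => Csum N (fun b => Csum N (fun a' => Csum N (fun b' =>
              Cmul (Cconj (v a b)) (Cmul (pure_dens phi a b a' b') (v a' b'))))))).
Proof.
  set (S := Csum N (fun a' => Csum N (fun b' => Cmul (Cconj (phi a' b')) (v a' b')))).
  assert (E : Csum N (fun a => Csum N (fun b => Csum N (fun a' => Csum N (fun b' =>
              Cmul (Cconj (v a b)) (Cmul (pure_dens phi a b a' b') (v a' b')))))) = Cmul (Cconj S) S).
  { transitivity (Csum N (fun a => Csum N (fun b => Cmul (Cmul (Cconj (v a b)) (phi a b)) S))).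
    { apply Csum_ext; intros; apply Csum_ext; intros. unfold S. rewrite <- Csum_mul_l.
      apply Csum_ext; intros. rewrite <- Csum_mul_l. apply Csum_ext; intros.
      unfold pure_dens. apply Ceq; unfold Cmul, Cconj; simpl; ring. }
    rewrite (Csum_ext N _ (fun a => Cmul (Csum N (fun b => Cmul (Cconj (v a b)) (phi a b))) S)).
    2:{ intros. rewrite Csum_mul_r. reflexivity. }
    rewrite Csum_mul_r. f_equal. unfold S. rewrite Csum_conj. apply Csum_ext; intros.
    rewrite Csum_conj. apply Csum_ext; intros. apply Ceq; unfold Cmul, Cconj; simpl; ring. }
  rewrite E. unfold Cmul, Cconj; simpl. nra.
Qed.

Lemma phi_real y z a b : Im (phi_vec y z a b) = 0.
Proof. destruct a as [|[|a]], b as [|[|b]]; reflexivity. Qed.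

Lemma phi_zero y z a b : (2 <= a + b)%nat -> phi_vec y z a b = RtoC 0.
Proof. intros H. destruct a as [|[|a]], b as [|[|b]]; simpl in H; try lia; reflexivity. Qed.
Lemma amp110 y z : amp y z 1 1 0 = sqrt z.
Proof. unfold amp, passive_amp. rewrite (iter_slice (Umode y z) 0 1). rewrite U00. cbn [iter_create Nat.leb Nat.sub fact Nat.mul Nat.add vac3].
  replace (INR 1) with 1 by reflexivity. unfold Rdiv. rewrite Rinv_1, !Rmult_1_r, sqrt_1. simpl. field. Qed.
Lemma amp101 y z : amp y z 1 0 1 = sqrt (1-z) * sqrt y.
Proof. unfold amp, passive_amp. rewrite (iter_slice (Umode y z) 0 0). rewrite (iter_slice (Umode y z) 1 1). rewrite U01. cbn [iter_create Nat.leb Nat.sub fact Nat.mul Nat.add vac3]. 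
  replace (INR 1) with 1 by reflexivity. unfold Rdiv. rewrite Rinv_1, !Rmult_1_r, sqrt_1. simpl. field. Qed.

Section Phi.
Variables y z : R.
Hypothesis Hy : 0 <= y <= 1.
Hypothesis Hz : 0 < z <= 1.
Let p := 1 - (1 - y) * (1 - z).
Let q := y * (1 - z).
Lemma p_pos : 0 < p. Proof. unfold p. nra. Qed.
Lemma pq : z + q = p. Proof. unfold p, q. ring. Qed.
Let phi := phi_vec y z.

Lemma Tr_phi0 : Tr (pure_dens phi) 0 = 0.
Proof. unfold Tr, pure_dens, phi. simpl. ring. Qed.
Lemma Tr_phi1 : Tr (pure_dens phi) 1 = 1.
Proof.
  unfold Tr, pure_dens, phi. simpl. fold p. pose proof p_pos. pose proof pq.
  rewrite !sqrt_sqrt. 2,3: apply Rle_mult_inv_pos; unfold q in *; nra.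
  field_simplify; [|lra]. unfold q in *. field_simplify in H0. rewrite <- H0. field. lra.
Qed.
Lemma Tr_phi2 n : (2 <= n)%nat -> Tr (pure_dens phi) n = 0.
Proof.
  intros Hn. unfold Tr. rewrite Re_Csum. apply sum_zero. intros i Hi.
  unfold pure_dens, phi. rewrite phi_zero by lia. simpl. ring.
Qed.

Lemma Tr_partial N : sum_f_R0 (Tr (pure_dens phi)) (S N) = 1.
Proof.
  induction N. simpl. rewrite Tr_phi0, Tr_phi1. ring.
  rewrite tech5. rewrite IHN, Tr_phi2 by lia. ring.
Qed.

Lemma phi_density : is_density (pure_dens phi).
Proof.
  split; [|split].
  - intros a b a' b'. unfold pure_dens. pose proof (phi_real y z a b). pose proof (phi_real y z a' b').
    fold phi in H, H0. destruct (phi a b), (phi a' b'). simpl in *. subst.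
    apply Ceq; unfold Cmul, Cconj; simpl; ring.
  - intros N v. apply pure_psd.
  - intros eps Heps. exists 1%nat. intros n Hn. destruct n; [lia|].
    replace (sum_f_R0 _ (S n)) with 1 by (symmetry; apply (Tr_partial n)). unfold Rdist. rewrite Rminus_diag, Rabs_R0. lra.
Qed.

Lemma click_phi1 : click_term y z (pure_dens phi) 1 = p.
Proof.
  rewrite click_reduce. simpl. rewrite amp110, amp101. unfold pure_dens, phi; simpl. fold p.
  pose proof p_pos. pose proof pq. unfold q in H0.
  rewrite !sqrt_div_alt by lra. rewrite sqrt_mult_alt by lra.
  set (sz := sqrt z). set (sy := sqrt y). set (s1 := sqrt (1 - z)). set (sp := sqrt p).
  assert (E1 : sz * sz = z) by (apply sqrt_sqrt; lra).
  assert (E2 : sy * sy = y) by (apply sqrt_sqrt; lra).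
  assert (E3 : s1 * s1 = 1 - z) by (apply sqrt_sqrt; lra).
  assert (E4 : sp * sp = p) by (apply sqrt_sqrt; lra).
  assert (E5 : 0 < sp) by (apply sqrt_lt_R0; lra).
  transitivity ((sz * sz + (sy * sy) * (s1 * s1)) ^ 2 / (sp * sp)). field. lra.
  rewrite E1, E2, E3, E4. rewrite H0. field. lra.
Qed.

Lemma click_phi2 n : (2 <= n)%nat -> click_term y z (pure_dens phi) n = 0.
Proof.
  intros Hn. rewrite click_reduce. apply sum_zero; intros a Ha. apply sum_zero; intros a' Ha'.
  unfold pure_dens, phi. rewrite (phi_zero y z a) by lia. simpl. ring.
Qed.

Lemma phi_click : click_prob_is y z (pure_dens phi) p.
Proof.
  assert (Hs : forall N, sum_f_R0 (fun n => click_term y z (pure_dens phi) (S n)) N = p).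
  { induction N. simpl. apply click_phi1. rewrite tech5, IHN, click_phi2 by lia. ring. }
  intros eps Heps. exists 0%nat. intros n _. rewrite Hs. unfold Rdist. rewrite Rminus_diag, Rabs_R0. lra.
Qed.
End Phi.

Theorem mainTheorem3 :
  (forall y z : R, 0 <= y <= 1 -> 0 < z <= 1 ->
     is_lub (achievable y z) (1 - (1 - y) * (1 - z)) /\
     is_density (pure_dens (phi_vec y z)) /\
     click_prob_is y z (pure_dens (phi_vec y z)) (1 - (1 - y) * (1 - z))) /\
  (forall x : R, 0 < x <= 1 / 2 ->
     is_lub (achievable (1 - 1 / (2 * (1 - x))) (2 * x)) (1 / (2 * (1 - x)))).
Proof.
  assert (P1 : forall y z : R, 0 <= y <= 1 -> 0 < z <= 1 ->
     is_lub (achievable y z) (1 - (1 - y) * (1 - z)) /\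
     is_density (pure_dens (phi_vec y z)) /\
     click_prob_is y z (pure_dens (phi_vec y z)) (1 - (1 - y) * (1 - z))).
  { intros y z Hy Hz. pose proof (phi_density y z Hy Hz). pose proof (phi_click y z Hy Hz).
    split; [|split; auto]. split.
    - intros t Ht. apply upper; auto.
    - intros b Hb. apply Hb. exists (pure_dens (phi_vec y z)). auto. }
  split; [exact P1|].
  intros x Hx.
  assert (Hy : 0 <= 1 - 1 / (2 * (1 - x)) <= 1).
  { assert (Hd: 1 <= 2*(1-x)) by lra.
    assert (Hi : 1/(2*(1-x)) * (2*(1-x)) = 1) by (field; lra).
    assert (0 < 1/(2*(1-x))) by (apply Rdiv_lt_0_compat; lra). split; nra. }
  destruct (P1 _ (2 * x) Hy ltac:(lra)) as [H _].
  replace (1 / (2 * (1 - x))) with (1 - (1 - (1 - 1 / (2 * (1 - x)))) * (1 - 2 * x)) at 2.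
  exact H. field. lra.
Qed.
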